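(* Let $p\in\{2,3\}$ and $D=A\times B$ with $A=\langle a\rangle$, $B=\langle b\rangle$, $|a|=|b|=p$. If $\mathcal{A}$ is an $S$-ring over $D$, then one of the following holds: (1) $\mathcal{A}$ has rank $2$; (2) $\mathcal{A}$ is the tensor product of two $S$-rings over cyclic groups of order $p$; (3) $\mathcal{A}$ is the wreath product of two $S$-rings over cyclic groups of order $p$; (4) $p=3$ and $\mathcal{A}=\mathrm{Cyc}(K,D)$, where $K=\{\varepsilon,\delta\}$, $\delta:x\mapsto x^{-1}$; (5) $p=3$ and $\mathcal{A}\cong_{\mathrm{Cay}}\mathrm{Cyc}(K,D)$, where $K=\langle\sigma\rangle$ and $\sigma\in\mathrm{Aut}(D)$ is given by $a\mapsto b$, $b\mapsto a^2$.
   Context: Let $G$ be a finite group with identity $e$; for $X\subseteq G$ write $\underline{X}=\sum_{x\in X}x\in\mathbb{Z}G$. An $S$-ring over $G$ is a subring $\mathcal{A}\subseteq\mathbb{Z}G$ for which there is a partition $\mathcal{S}(\mathcal{A})$ of $G$ (the basic sets) with $\{e\}\in\mathcal{S}(\mathcal{A})$, $X^{-1}\in\mathcal{S}(\mathcal{A})$ whenever $X\in\mathcal{S}(\mathcal{A})$, and $\mathcal{A}=\mathrm{Span}_{\mathbb{Z}}\{\underline{X}:X\in\mathcal{S}(\mathcal{A})\}$; the rank is $|\mathcal{S}(\mathcal{A})|$. For $S$-rings $\mathcal{A}_1,\mathcal{A}_2$ over $G_1,G_2$ (identities $e_1,e_2$), the tensor product $\mathcal{A}_1\otimes\mathcal{A}_2$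 is the $S$-ring over $G_1\times G_2$ with basic sets $X_1\times X_2$ ($X_i\in\mathcal{S}(\mathcal{A}_i)$), and the wreath product $\mathcal{A}_1\wr\mathcal{A}_2$ is the $S$-ring over $G_1\times G_2$ with basic sets $X_1\times\{e_2\}$ ($X_1\in\mathcal{S}(\mathcal{A}_1)$) and $G_1\times X_2$ ($X_2\in\mathcal{S}(\mathcal{A}_2)\setminus\{\{e_2\}\}$); here ''$\mathcal{A}$ is the tensor/wreath product of two $S$-rings over cyclic groups of order $p$'' means it equals such a product for a decomposition of $D$ as an internal direct product of two subgroups of order $p$. For $K\leq\mathrm{Aut}(G)$, $\mathrm{Cyc}(K,G)$ is the $S$-ring whose basic sets are the $K$-orbits on $G$; $\varepsilon$ is the identity. $\mathcal{A}\cong_{\mathrm{Cay}}\mathcal{A}'$ means there is a group isomorphism $f$ with $\{X^f:X\in\mathcal{S}(\mathcal{A})\}=\mathcal{S}(\mathcal{A}')$. *)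

(* Defs.v *)
From mathcomp Require Import all_boot all_fingroup all_algebra all_solvable.
Set Implicit Arguments. Unset Strict Implicit. Unset Printing Implicit Defensive.
Import GRing.Theory.
Local Open Scope group_scope.

Section SRing.
Variable gT : finGroupType.

(* Elements of the integral group ring are modelled as integer-valued
   functions on gT (their support lies in the ambient group). *)
Definition underline (X : {set gT}) : {ffun gT -> int} :=
  [ffun g => Posz (g \in X)].

Definition gr_mul (f h : {ffun gT -> int}) : {ffun gT -> int} :=
  [ffun g => (\sum_(x : gT) f x * h ((x^-1 * g)%g))%R].

Definition in_span (S : {set {set gT}}) (f : {ffun gT -> int}) : Prop :=
  exists c : {set gT} -> int,
    forall g, f g = (\sum_(X in S) c X * underline X g)%R.

(* S is the set of basic sets of an S-ring over G: a partition of G containing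
   {e}, closed under inversion, whose span (the Z-span of the underline X) is
   closed under multiplication (hence is a subring of ZG). *)
Definition is_Sring (G : {group gT}) (S : {set {set gT}}) : Prop :=
  [/\ partition S G, [set 1] \in S,
      (forall X, X \in S -> X^-1 \in S) &
      (forall X Y, X \in S -> Y \in S ->
         in_span S (gr_mul (underline X) (underline Y)))].

Definition sring_rank (S : {set {set gT}}) : nat := #|S|.

(* basic sets of the tensor product of S1 over A1 and S2 over A2
   (inside the internal direct product A1 x A2, X1 x X2 is X1 * X2) *)
Definition tensor_bs (S1 S2 : {set {set gT}}) : {set {set gT}} :=
  [set X1 * X2 | X1 in S1, X2 in S2].

Definition wreath_bs (A1 : {set gT}) (S1 S2 : {set {set gT}}) : {set {set gT}} :=
  S1 :|: [set A1 * X2 | X2 in S2 :\ [set 1]].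

Definition Cyc (K : {set {perm gT}}) (D : {set gT}) : {set {set gT}} :=
  [set orbit 'P K x | x in D].

End SRing.

(* Main.v *)
Require Import Defs.
From mathcomp Require Import all_boot all_fingroup all_algebra all_solvable.
From mathcomp Require Import zify.
Set Implicit Arguments. Unset Strict Implicit. Unset Printing Implicit Defensive.
Import GRing.Theory.


Section Idx.
Variable p : nat.
Definition nn := p * p.
Definition mkidx i j := (i %% p) * p + j %% p.
Definition iadd k l := mkidx (k %/ p + l %/ p) (k %% p + l %% p).
Definition iscale i k := mkidx (i * (k %/ p)) (i * (k %% p)).
Definition ineg k := iscale p.-1 k.
Definition isub z k := iadd z (ineg k).
Definition ilin i u j v := iadd (iscale i u) (iscale j v).

Fixpoint gen m := match m with 0 => [:: [::]] | m'.+1 =>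
  flatten [seq [seq rcons s x | x <- iota 0 m & (x == m') || (nth 0 s x == x)] | s <- gen m'] end.

Definition ngtab := [seq ineg k | k <- iota 0 nn].
Definition sbtab := [seq [seq isub z k | k <- iota 0 nn] | z <- iota 0 nn].
Definition lttab := [seq [seq [seq ilin (x %/ p) u (x %% p) v | x <- iota 0 nn] | v <- iota 0 nn] | u <- iota 0 nn].

Section R.
Variables (ng : seq nat) (sb : seq (seq nat)) (lt : seq (seq (seq nat))).
Definition LT u v x := nth 0 (nth [::] (nth [::] lt u) v) x.
Variable r : seq nat.
Definition clab k := nth 0 r k.
Definition cond0 := all (fun k => (clab k == 0) == (k == 0)) (iota 0 nn).
Definition invc := all (fun k => all (fun l => (clab k == clab l) ==> (clab (nth 0 ng k) == clab (nth 0 ng l))) (iota 0 nn)) (iota 0 nn).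
Definition cnt i j z := count (fun k => (clab k == clab i) && (clab (nth 0 (nth [::] sb z) k) == clab j)) (iota 0 nn).
Definition src := all (fun i => (clab i != i) || all (fun j => (clab j != j) || all (fun z => cnt i j z == cnt i j (clab z)) (iota 0 nn)) (iota 0 nn)) (iota 0 nn).

Definition Rt (t : bool) i k := (i == k) || [&& t, i != 0 & k != 0].
Definition basis_b u v := uniq (nth [::] (nth [::] lt u) v).
Definition allp4 (P : nat -> nat -> nat -> nat -> bool) :=
  all (fun i => all (fun j => all (fun k => all (fun l => P i j k l) (iota 0 p)) (iota 0 p)) (iota 0 p)) (iota 0 p).
Definition trel u v t1 t2 := allp4 (fun i j k l =>
  (clab (LT u v (i * p + j)) == clab (LT u v (k * p + l))) == (Rt t1 i k && Rt t2 j l)).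
Definition wrel u v t1 t2 := allp4 (fun i j k l =>
  (clab (LT u v (i * p + j)) == clab (LT u v (k * p + l))) ==
  (if (j == 0) && (l == 0) then Rt t1 i k else [&& j != 0, l != 0 & Rt t2 j l])).
Definition bools := [:: false; true].
Definition srch (P : nat -> nat -> bool -> bool -> bool) :=
  has (fun u => has (fun v => basis_b u v && has (fun t1 => has (fun t2 => P u v t1 t2) bools) bools) (iota 0 nn)) (iota 0 nn).
Definition rank2_b := all (fun k => clab k == clab 1) (iota 1 nn.-1).
Definition allkl (P : nat -> nat -> bool) := all (fun k => all (fun l => P k l) (iota 0 nn)) (iota 0 nn).
Definition inv_b := allkl (fun k l => (clab k == clab l) == ((k == l) || (l == nth 0 ng k))).
Definition sig k := LT 1 (2 * p) k.
Definition pal_rel u w := allkl (fun k l => (clab k == clab l) == has (fun i => LT u w l == iter i sig (LT u w k)) (iota 0 4)).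
Definition pal_b := has (fun u => has (fun w => basis_b u w && pal_rel u w) (iota 0 nn)) (iota 0 nn).
Definition classify := [|| rank2_b, srch trel, srch wrel | (p == 3) && (inv_b || pal_b)].
End R.
Definition check := let ng := ngtab in let sb := sbtab in let lt := lttab in
  all (fun r => if cond0 r then if invc ng r then if src sb r then classify ng lt r else true else true else true) (gen nn).
End Idx.




Lemma check3 : check 3. Proof. vm_compute. reflexivity. Qed.
Lemma check2 : check 2. Proof. vm_compute. reflexivity. Qed.

Section CompLemmas.
Variable p : nat.
Hypothesis p_gt0 : 0 < p.

Lemma nth_ng k : k < nn p -> nth 0 (ngtab p) k = ineg p k.
Proof. by move=> hk; rewrite /ngtab (nth_map 0) ?size_iota // nth_iota. Qed.

Lemma nth_sb z k : z < nn p -> k < nn p -> nth 0 (nth [::] (sbtab p) z) k = isub p z k.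
Proof.
by move=> hz hk; rewrite /sbtab (nth_map 0) ?size_iota // nth_iota // (nth_map 0) ?size_iota // nth_iota.
Qed.

Lemma LT_E u v x : u < nn p -> v < nn p -> x < nn p ->
  LT (lttab p) u v x = ilin p (x %/ p) u (x %% p) v.
Proof.
move=> hu hv hx; rewrite /LT /lttab (nth_map 0) ?size_iota // nth_iota //.
by rewrite (nth_map 0) ?size_iota // nth_iota // (nth_map 0) ?size_iota // nth_iota.
Qed.

Lemma mkidx_lt i j : mkidx p i j < nn p.
Proof.
rewrite /mkidx /nn. have h1 := ltn_pmod i p_gt0. have h2 := ltn_pmod j p_gt0. nia.
Qed.

Lemma mkidx_div i j : mkidx p i j %/ p = i %% p.
Proof. by rewrite /mkidx divnMDl // divn_small ?addn0 // ltn_pmod. Qed.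

Lemma mkidx_mod i j : mkidx p i j %% p = j %% p.
Proof. by rewrite /mkidx modnMDl modn_mod. Qed.

End CompLemmas.

Lemma gen_complete m s : size s = m ->
  (forall k, k < m -> nth 0 s k <= k /\ nth 0 s (nth 0 s k) = nth 0 s k) -> s \in gen m.
Proof.
elim: m s => [|m IH] s.
  by move/size0nil->; rewrite inE.
move=> hs hk.
have -> : s = rcons (take m s) (nth 0 s m).
  by rewrite -{1}(cat_take_drop m s) (drop_nth 0) ?hs // drop_oversize ?size_drop ?hs ?subSnn // cats1.
rewrite /=; apply/flattenP; exists [seq rcons (take m s) x | x <- iota 0 m.+1 & (x == m) || (nth 0 (take m s) x == x)].
  apply: map_f; apply: IH; first by rewrite size_take hs ltnSn.
  move=> k km; have [h1 h2] := hk k (ltnW km).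
  have e : nth 0 (take m s) k = nth 0 s k by rewrite nth_take.
  have hl : nth 0 s k < m by apply: leq_ltn_trans km.
  by rewrite e nth_take.
apply: map_f; rewrite mem_filter mem_iota /=.
have [h1 h2] := hk m (ltnSn m); rewrite ltnS h1 andbT.
case: (ltngtP (nth 0 s m) m) h1 => // hlt _.
by rewrite nth_take // h2 eqxx orbT.

Qed.

Local Open Scope group_scope.

Lemma sum_posz_count (T : Type) (s : seq T) (P : pred T) :
  (\sum_(k <- s) Posz (P k))%R = Posz (count P s).
Proof. elim: s => [|x s IH]; first by rewrite big_nil. by rewrite big_cons IH /= PoszD. Qed.

Lemma posz_mulb (b1 b2 : bool) : (Posz b1 * Posz b2)%R = Posz (b1 && b2).
Proof. by case: b1; case: b2. Qed.

Lemma sum_posz_card (T : finType) (P : pred T) : (\sum_(x : T) Posz (P x))%R = Posz #|P|.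
Proof. by rewrite sum_posz_count -sum1_count sum1_card. Qed.

Section Gen.
Variable gT : finGroupType.
Implicit Types (x y g h : gT) (H : {group gT}).

Definition Rel (t : bool) x y := (x == y) || [&& t, x != 1 & y != 1].
Definition blk (H : {set gT}) t x := if t && (x != 1) then H :\ 1 else [set x].
Definition Sig (H : {set gT}) t :=
  if t then [set [set 1]; H :\ 1] else [set [set x] | x in H].

Lemma mem_blk H t x y : x \in H -> (y \in blk H t x) = (y \in H) && Rel t x y.
Proof.
move=> hx; rewrite /blk /Rel; case: (eqVneq x y) => [<-|nxy].
  by rewrite hx; case: t; case: (eqVneq x 1) => //= nx; rewrite !inE ?eqxx ?nx.
rewrite /= andbC; case: t; case: (eqVneq x 1) => [e|nx] //=; rewrite !inE ?andbT ?andbF.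
all: by rewrite ?(andbC (y != 1)) // eq_sym; apply/negbTE.
Qed.

Lemma blk_sub H t x : x \in H -> blk H t x \subset H.
Proof. by move=> hx; apply/subsetP => y; rewrite mem_blk // => /andP []. Qed.

Lemma blk_self H t x : x \in H -> x \in blk H t x.
Proof. by move=> hx; rewrite mem_blk // hx /Rel eqxx. Qed.

Lemma blk1 H t : blk H t 1 = [set 1].
Proof. by rewrite /blk eqxx andbF. Qed.

Lemma Rel_sym t x y : Rel t x y = Rel t y x.
Proof. by rewrite /Rel eq_sym; case: t => //=; rewrite andbC. Qed.

Lemma Rel_trans t x y z : Rel t x y -> Rel t y z -> Rel t x z.
Proof.
rewrite /Rel; case: (eqVneq x y) => [->|_] //= /and3P [ht nx ny].
case: (eqVneq y z) => [<-|_] /=; first by rewrite ht nx ny orbT.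
by case/and3P => _ _ nz; rewrite ht nx nz orbT.
Qed.

Lemma blk_eq H t x y : x \in H -> y \in blk H t x -> blk H t y = blk H t x.
Proof.
move=> hx; rewrite mem_blk // => /andP [hy r]; apply/setP => z.
rewrite !mem_blk //; case: (z \in H) => //=; apply/idP/idP => h.
  exact: Rel_trans r h.
by apply: Rel_trans h; rewrite Rel_sym.
Qed.

Lemma Sig_blk H t : 1 < #|H| -> Sig H t = [set blk H t x | x in H].
Proof.
move=> hH; rewrite /Sig /blk; case: t; last by apply: eq_imset => x.
have [x hx nx] : exists2 x, x \in H & x != 1.
  have : 0 < #|H :\ 1| by move: hH; rewrite (cardsD1 1 H) group1.
  by rewrite card_gt0 => /set0Pn [x]; rewrite !inE => /andP [n h]; exists x.
apply/setP => X; rewrite !inE; apply/idP/imsetP => [/orP [/eqP ->|/eqP ->]|[y hy ->]].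
- by exists 1; rewrite ?group1 ?eqxx.
- by exists x; rewrite ?nx.
- by case: (eqVneq y 1) => [->|ny] /=; rewrite eqxx ?orbT.
Qed.

Lemma partition_blocks (B : gT -> {set gT}) (G : {set gT}) :
  (forall x, x \in G -> x \in B x) -> (forall x, x \in G -> B x \subset G) ->
  (forall x y, x \in G -> y \in B x -> B y = B x) ->
  partition [set B x | x in G] G.
Proof.
move=> hs hsub heq; apply/and3P; split.
- apply/eqP/setP => y; apply/bigcupP/idP => [[X /imsetP [x hx ->] hy]|hy].
    exact: (subsetP (hsub x hx)).
  by exists (B y); [exact: imset_f | exact: hs].
- apply/trivIsetP => X Y /imsetP [x hx ->] /imsetP [y hy ->] nXY.
  apply/pred0P => z /=; apply/negP => /andP [hzx hzy]; case/eqP: nXY.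
  by rewrite -(heq x z hx hzx) (heq y z hy hzy).
- by apply/imsetP => -[x hx e]; have := hs x hx; rewrite -e inE.
Qed.

Lemma span_of_const (G : {set gT}) (P : {set {set gT}}) (f : {ffun gT -> int}) :
  partition P G -> (forall g, g \notin G -> f g = 0%R) ->
  (forall Z g h, Z \in P -> g \in Z -> h \in Z -> f g = f h) -> in_span P f.
Proof.
case/and3P => /eqP hcov htriv h0 hout hconst.
exists (fun X => f (repr X)) => g.
case: (boolP (g \in G)) => hg.
  have hgc : g \in cover P by rewrite hcov.
  have hZ := pblock_mem hgc; have hgZ : g \in pblock P g by rewrite mem_pblock.
  rewrite (bigD1 (pblock P g)) //= big1 => [|X /andP [hX neq]].
    rewrite /underline ffunE hgZ mulr1 addr0; apply: (hconst _ _ _ hZ hgZ).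
    exact: (mem_repr _ hgZ).
  rewrite /underline ffunE; case: (boolP (g \in X)) => hgX; last by rewrite mulr0.
  by case/eqP: neq; rewrite (def_pblock htriv hX hgX).
rewrite hout // big1 // => X hX; rewrite /underline ffunE.
suff -> : (g \in X) = false by rewrite mulr0.
apply/negP => hgX; case/negP: hg; rewrite -hcov; apply/bigcupP; by exists X.
Qed.

Lemma grmul_out (H : {group gT}) (X Y : {set gT}) g : X \subset H -> Y \subset H -> g \notin H ->
  gr_mul (underline X) (underline Y) g = 0%R.
Proof.
move=> hX hY hg; rewrite /gr_mul ffunE big1 // => x _; rewrite /underline !ffunE.
case: (boolP (x \in X)) => hx; last by rewrite mul0r.
case: (boolP (x^-1 * g \in Y)) => hy; last by rewrite mulr0.
case/negP: hg; rewrite -(mulKVg x g) groupM //; [exact: (subsetP hX) | exact: (subsetP hY)].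
Qed.

Lemma grmul_1l (Y : {set gT}) g : gr_mul (underline [set 1]) (underline Y) g = Posz (g \in Y).
Proof.
rewrite /gr_mul ffunE (bigD1 1) //= big1 => [|x nx]; first by rewrite /underline !ffunE set11 invg1 mul1g mul1r addr0.
by rewrite /underline ffunE inE (negbTE nx) mul0r.
Qed.

Lemma grmul_1r (X : {set gT}) g : gr_mul (underline X) (underline [set 1]) g = Posz (g \in X).
Proof.
rewrite /gr_mul ffunE (bigD1 g) //= big1 => [|x nx]; first by rewrite /underline !ffunE mulVg set11 mulr1 addr0.
rewrite /underline !ffunE in_set1; suff -> : (x^-1 * g == 1) = false by rewrite mulr0.
by apply/negbTE; apply: contra nx => /eqP e; rewrite eq_sym -[g](mulKVg x) e mulg1.
Qed.

Lemma grmul_HH H g : g \in H :\ 1 ->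
  gr_mul (underline (H :\ 1)) (underline (H :\ 1)) g = Posz (#|H :\ 1| - 1).
Proof.
move=> hg; rewrite /gr_mul ffunE.
have -> : (\sum_x (underline (H :\ 1%g) x * underline (H :\ 1%g) (x^-1 * g)%g))%R
   = (\sum_x Posz (x \in (H :\ 1%g) :\ g))%R.
  apply: eq_bigr => x _; rewrite /underline !ffunE posz_mulb; congr Posz.
  move: hg; rewrite !inE => /andP [ng hg].
  rewrite (groupMr _ hg) groupV -eq_mulVg1.
  by case: (x \in H); case: (x == 1); case: (x == g).
by rewrite sum_posz_card (cardsD1 g (H :\ 1)) hg add1n subSS subn0.
Qed.

Lemma Sig_sring H t : 1 < #|H| -> is_Sring H (Sig H t).
Proof.
move=> hH; have hb := Sig_blk t hH.
have hpart : partition (Sig H t) H.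
  rewrite hb; apply: partition_blocks => x hx; [exact: blk_self | exact: blk_sub | exact: blk_eq].
split=> //.
- by rewrite hb -(blk1 H t); apply: imset_f.
- move=> X; rewrite hb => /imsetP [x hx ->]; apply/imsetP; exists x^-1; rewrite ?groupV //.
  apply/setP => y; rewrite mem_invg !mem_blk ?groupV //.
  by rewrite /Rel eq_invg_sym !eq_invg1 invg1 [x^-1 == y]eq_invg_sym.
- move=> X Y hX hY; apply: (span_of_const hpart).
    move=> g hg; apply: (grmul_out (H := H)) => //.
      by move: hX; rewrite hb => /imsetP [x hx ->]; apply: blk_sub.
    by move: hY; rewrite hb => /imsetP [x hx ->]; apply: blk_sub.
  move=> Z g h; rewrite {1}hb => /imsetP [z hz ->].
  rewrite /blk; case: t hX hY {hb hpart} => /=; last first.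
    by move=> _ _; rewrite !inE => /eqP -> /eqP ->.
  case: (eqVneq z 1) => /= [_ _ _|nz]; first by rewrite !inE => /eqP -> /eqP ->.
  rewrite /Sig !inE => hX hY hg hh.
  move/andP: hg => [/negbTE g1 gH]; move/andP: hh => [/negbTE h1 hH'].
  case/orP: hX => /eqP ->.
    by rewrite !grmul_1l; case/orP: hY => /eqP ->; rewrite !inE ?g1 ?h1 ?gH ?hH'.
  case/orP: hY => /eqP ->; first by rewrite !grmul_1r !inE ?g1 ?h1 ?gH ?hH'.
  by rewrite !grmul_HH // !inE ?g1 ?h1 ?gH ?hH'.
Qed.

End Gen.

Section Main.
Variables (gT : finGroupType) (p : nat) (D : {group gT}) (a b : gT).
Hypothesis p_gt1 : 1 < p.
Hypothesis oa : #[a] = p.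
Hypothesis ob : #[b] = p.
Hypothesis dD : <[a]> \x <[b]> = D.
Hypothesis p_prime : prime p.
Let p_gt0 : 0 < p. Proof. by apply: ltnW. Qed.

Definition phi k := a ^+ (k %/ p) * b ^+ (k %% p).

Lemma D_facts : [/\ <[a]> * <[b]> = D, <[b]> \subset 'C(<[a]>) & <[a]> :&: <[b]> = 1].
Proof. by case/dprodP: dD => _ h1 h2 h3. Qed.

Lemma abD : abelian D.
Proof.
case: D_facts => <- c _; rewrite abelianM !cycle_abelian /=.
exact: c.
Qed.

Lemma comD x y : x \in D -> y \in D -> commute x y.
Proof. by move=> hx hy; apply: (centsP abD). Qed.

Lemma aD : a \in D. Proof. by case: D_facts => <- _ _; have := mem_mulg (cycle_id a) (group1 <[b]>); rewrite mulg1. Qed.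
Lemma bD : b \in D. Proof. by case: D_facts => <- _ _; have := mem_mulg (group1 <[a]>) (cycle_id b); rewrite mul1g. Qed.

Lemma phi_mk i j : phi (mkidx p i j) = a ^+ i * b ^+ j.
Proof.
rewrite /phi mkidx_div // mkidx_mod //.
by rewrite -{1}oa expg_mod_order -{1}ob expg_mod_order.
Qed.

Lemma phiD k : phi k \in D.
Proof. by rewrite /phi groupM ?groupX ?aD ?bD. Qed.

Lemma expD x : x \in D -> x ^+ p = 1.
Proof.
move=> hx; case: D_facts => eD _ _.
move: hx; rewrite -eD => /mulsgP [y z /cycleP [i1 ->] /cycleP [j1 ->] ->].
rewrite expgMn; last by apply: comD; rewrite groupX ?aD ?bD.
have ha : a ^+ p = 1 by rewrite -oa expg_order.
have hb : b ^+ p = 1 by rewrite -ob expg_order.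
by rewrite -!expgM !(mulnC _ p) !expgM ha hb !expg1n mulg1.
Qed.

Lemma phi_mk_gen x : x \in D -> exists i j, i < p /\ j < p /\ x = a ^+ i * b ^+ j.
Proof.
case: D_facts => eD _ _; rewrite -eD => /mulsgP [y z /cycleP [i1 ->] /cycleP [j1 ->] ->].
exists (i1 %% p), (j1 %% p); rewrite !ltn_pmod //; split=> //; split=> //.
by rewrite -{1}oa expg_mod_order -{1}ob expg_mod_order.
Qed.

Lemma phi_add k l : phi (iadd p k l) = phi k * phi l.
Proof.
rewrite /iadd phi_mk /phi !expgD.
have c : commute (b ^+ (k %% p)) (a ^+ (l %/ p)) by apply: comD; rewrite groupX ?aD ?bD.
by rewrite -!mulgA; congr (_ * _); rewrite !mulgA; congr (_ * _).
Qed.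

Lemma phi_scale i k : phi (iscale p i k) = phi k ^+ i.
Proof.
rewrite /iscale phi_mk /phi expgMn; last by apply: comD; rewrite groupX ?aD ?bD.
by rewrite !expgM (expgAC a) (expgAC b).
Qed.

Lemma phi0 : phi 0 = 1.
Proof. by rewrite /phi div0n mod0n !expg0 mulg1. Qed.

Lemma phi_neg k : phi (ineg p k) = (phi k)^-1.
Proof.
rewrite /ineg phi_scale -(mulgK (phi k) (phi k ^+ p.-1)) -expgSr prednK //.
by rewrite (expD (phiD k)) mul1g.
Qed.

Lemma phi_sub z k : phi (isub p z k) = (phi k)^-1 * phi z.
Proof. by rewrite /isub phi_add phi_neg; apply: comD; rewrite ?groupV phiD. Qed.

Lemma phi_lin i u j v : phi (ilin p i u j v) = phi u ^+ i * phi v ^+ j.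
Proof. by rewrite /ilin phi_add !phi_scale. Qed.

Lemma idx_lt k : k < nn p -> k %/ p < p.
Proof. rewrite /nn => h; rewrite ltn_divLR //. Qed.

Lemma idx_eq k : k < nn p -> k = mkidx p (k %/ p) (k %% p).
Proof. by move=> hk; rewrite /mkidx modn_mod modn_small ?idx_lt // -divn_eq. Qed.

Lemma expa_inj i j : i < p -> j < p -> a ^+ i = a ^+ j -> i = j.
Proof. by move=> hi hj /eqP; rewrite eq_expg_mod_order oa !modn_small // => /eqP. Qed.
Lemma expb_inj i j : i < p -> j < p -> b ^+ i = b ^+ j -> i = j.
Proof. by move=> hi hj /eqP; rewrite eq_expg_mod_order ob !modn_small // => /eqP. Qed.

Lemma ab_inj i j k l : a ^+ i * b ^+ j = a ^+ k * b ^+ l -> a ^+ i = a ^+ k /\ b ^+ j = b ^+ l.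
Proof.
move=> e; case: D_facts => _ _ ti.
have e2 : (a ^+ k)^-1 * a ^+ i = b ^+ l * (b ^+ j)^-1.
  by apply: (canRL (mulgK (b ^+ j))); rewrite -mulgA e mulKg.
have : (a ^+ k)^-1 * a ^+ i \in <[a]> :&: <[b]>.
  rewrite inE; apply/andP; split; first by rewrite groupM ?groupV ?mem_cycle.
  by rewrite e2 groupM ?groupV ?mem_cycle.
rewrite ti inE => /eqP h.
have hk : a ^+ i = a ^+ k by apply: (mulgI (a ^+ k)^-1); rewrite h mulVg.
split=> //; move: e; rewrite hk => /mulgI //.
Qed.

Lemma phi_inj k l : k < nn p -> l < nn p -> phi k = phi l -> k = l.
Proof.
move=> hk hl /ab_inj [e1 e2].
have h1 := expa_inj (idx_lt hk) (idx_lt hl) e1.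
have h2 := expb_inj (ltn_pmod k p_gt0) (ltn_pmod l p_gt0) e2.
by rewrite (idx_eq hk) (idx_eq hl) h1 h2.
Qed.

Lemma phi_surj x : x \in D -> exists2 k, k < nn p & phi k = x.
Proof.
case/phi_mk_gen => i [j [hi [hj ->]]]; exists (mkidx p i j); first exact: mkidx_lt.
by rewrite phi_mk.
Qed.

Lemma phi_lt_eq k l : k < nn p -> l < nn p -> (phi k == phi l) = (k == l).
Proof. by move=> hk hl; apply/eqP/eqP => [/phi_inj|->] //; apply. Qed.


Variable S : {set {set gT}}.
Hypothesis hS : is_Sring D S.
Local Notation nn := (nn p).
Lemma partS : partition S D. Proof. by case: hS. Qed.
Lemma trivS : trivIset S. Proof. by case/and3P: partS. Qed.
Lemma coverS : cover S = D. Proof. by case/and3P: partS => /eqP. Qed.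
Lemma set0S : set0 \notin S. Proof. by case/and3P: partS. Qed.

Lemma pblockD x y : y \in pblock S x -> y \in D.
Proof.
rewrite -coverS /pblock; case: pickP => [X /andP [hX _]|_] /= hy; last by rewrite inE in hy.
by apply/bigcupP; exists X.
Qed.

Lemma pblock_self x : x \in D -> x \in pblock S x.
Proof. by move=> hx; rewrite mem_pblock coverS. Qed.

Lemma pblockS x : x \in D -> pblock S x \in S.
Proof. by move=> hx; apply: pblock_mem; rewrite coverS. Qed.

Lemma pblock_sym x y : x \in D -> y \in D -> (y \in pblock S x) = (x \in pblock S y).
Proof.
move=> hx hy; apply/idP/idP => h.
  by rewrite (same_pblock trivS h) pblock_self.
by rewrite (same_pblock trivS h) pblock_self.
Qed.

Lemma pblock_eq x y : y \in pblock S x -> pblock S y = pblock S x.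
Proof. exact: same_pblock trivS. Qed.

Lemma pblock1 : pblock S 1 = [set 1].
Proof. by case: hS => _ h1 _ _; apply: def_pblock trivS h1 (set11 _). Qed.

Lemma S_pblocks : S = [set pblock S x | x in D].
Proof.
apply/setP => X; apply/idP/imsetP => [hX|[x hx ->]]; last exact: pblockS.
have : X != set0 by apply: contraTneq hX => ->; exact: set0S.
case/set0Pn => x hx; exists x; last by rewrite (def_pblock trivS hX hx).
by rewrite -coverS; apply/bigcupP; exists X.
Qed.

Definition lab k := find (fun j => phi j \in pblock S (phi k)) (iota 0 nn).

Lemma lab_has k : k < nn -> has (fun j => phi j \in pblock S (phi k)) (iota 0 nn).
Proof. by move=> hk; apply/hasP; exists k; rewrite ?mem_iota //= pblock_self ?phiD. Qed.

Lemma lab_lt k : k < nn -> lab k < nn.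
Proof. by move=> hk; have := lab_has hk; rewrite has_find size_iota. Qed.

Lemma lab_le k : k < nn -> lab k <= k.
Proof.
move=> hk; rewrite leqNgt; apply/negP => /(before_find 0).
by rewrite nth_iota //= pblock_self ?phiD.
Qed.

Lemma lab_in k : k < nn -> phi (lab k) \in pblock S (phi k).
Proof. by move=> hk; have := nth_find 0 (lab_has hk); rewrite nth_iota ?add0n ?lab_lt. Qed.

Lemma lab_eq k l : k < nn -> l < nn -> (lab k == lab l) = (phi l \in pblock S (phi k)).
Proof.
move=> hk hl; apply/eqP/idP => [e|h].
  have h1 := lab_in hk; have h2 := lab_in hl; rewrite e in h1.
  by rewrite -(pblock_eq h1) (pblock_eq h2) pblock_self ?phiD.
by rewrite /lab (pblock_eq h).
Qed.

Definition rs := [seq lab k | k <- iota 0 nn].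

Lemma rsE k : k < nn -> clab rs k = lab k.
Proof. by move=> hk; rewrite /clab /rs (nth_map 0) ?size_iota // nth_iota. Qed.

Lemma rs_gen : rs \in gen nn.
Proof.
apply: gen_complete; first by rewrite size_map size_iota.
move=> k hk; have e := rsE hk; rewrite /clab in e; rewrite e lab_le //; split=> //.
have hl := lab_lt hk; have := rsE hl; rewrite /clab => ->.
by apply/esym/eqP; rewrite lab_eq // lab_in.
Qed.

Lemma lab0 : lab 0 = 0.
Proof. have := @lab_le 0; rewrite /nn muln_gt0 p_gt0 => /(_ isT). by rewrite leqn0 => /eqP. Qed.

Lemma nn_gt0 : 0 < nn. Proof. by rewrite /nn muln_gt0 p_gt0. Qed.

Lemma rs_cond0 : cond0 p rs.
Proof.
apply/allP => k; rewrite mem_iota add0n => /andP [_ hk].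
rewrite rsE // -{1}lab0 (eq_sym (lab k)) lab_eq ?nn_gt0 // phi0 pblock1 inE -phi0 phi_lt_eq ?nn_gt0 ?phiD //.
Qed.

Lemma rs_invc : invc p (ngtab p) rs.
Proof.
apply/allP => k; rewrite mem_iota add0n => /andP [_ hk].
apply/allP => l; rewrite mem_iota add0n => /andP [_ hl].
rewrite !rsE ?nth_ng // ?(@mkidx_lt p) //; apply/implyP; rewrite !lab_eq ?mkidx_lt // => h.
have hX := pblockS (phiD k).
have hV : (pblock S (phi k))^-1 \in S by case: hS => _ _ hv _; apply: hv.
have e : pblock S (phi (ineg p k)) = (pblock S (phi k))^-1.
  by apply: def_pblock trivS hV _; rewrite phi_neg memV_invg pblock_self ?phiD.
by rewrite e phi_neg memV_invg.
Qed.

Lemma span_const f Z g h : in_span S f -> Z \in S -> g \in Z -> h \in Z -> f g = f h.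
Proof.
case=> c hc hZ hg hh; rewrite !hc.
suff e : forall x, x \in Z -> (\sum_(X in S) c X * underline X x = c Z)%R by rewrite !e.
move=> x hx; rewrite (bigD1 Z) //= big1 => [|X /andP [hX neq]].
  by rewrite /underline ffunE hx mulr1 addr0.
rewrite /underline ffunE; case: (boolP (x \in X)) => hxX; last by rewrite mulr0.
by case/eqP: neq; rewrite -(def_pblock trivS hX hxX) (def_pblock trivS hZ hx).
Qed.

Lemma D_ord : D = [set phi (nat_of_ord k) | k : 'I_nn] :> {set gT}.
Proof.
apply/setP => x; apply/idP/imsetP => [hx|[k _ ->]]; last exact: phiD.
by case: (phi_surj hx) => k hk <-; exists (Ordinal hk).
Qed.

Lemma isub_lt z k : isub p z k < nn.
Proof. exact: mkidx_lt. Qed.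

Lemma grm_val i j w : i < nn -> j < nn -> w < nn ->
  gr_mul (underline (pblock S (phi i))) (underline (pblock S (phi j))) (phi w)
  = Posz (cnt p (sbtab p) rs i j w).
Proof.
move=> hi hj hw; rewrite /gr_mul ffunE.
rewrite (bigID (mem D)) /= [X in (_ + X)%R]big1 ?addr0 => [|x hx]; last first.
  rewrite /underline ffunE.
  have -> : (x \in pblock S (phi i)) = false by apply: negbTE; apply: contra hx; exact: pblockD.
  by rewrite mul0r.
rewrite D_ord big_imset /=; last by move=> k l _ _ /phi_inj; move=> h; apply: val_inj; apply: h.
rewrite -(big_mkord xpredT (fun k => underline (pblock S (phi i)) (phi k) *
   underline (pblock S (phi j)) ((phi k)^-1 * phi w)%g))%R.
rewrite /cnt -sum_posz_count /index_iota subn0 big_seq [RHS]big_seq.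
apply: eq_bigr => k; rewrite mem_iota add0n => /andP [_ hk].
rewrite /underline !ffunE posz_mulb nth_sb // !rsE ?isub_lt //.
rewrite -phi_sub !lab_eq ?isub_lt //.
by rewrite (pblock_sym (phiD k) (phiD i)) (pblock_sym (phiD (isub p w k)) (phiD j)).
Qed.

Lemma rs_src : src p (sbtab p) rs.
Proof.
apply/allP => i; rewrite mem_iota add0n => /andP [_ hi]; apply/orP; right.
apply/allP => j; rewrite mem_iota add0n => /andP [_ hj]; apply/orP; right.
apply/allP => z; rewrite mem_iota add0n => /andP [_ hz].
rewrite rsE //; apply/eqP.
have hX := pblockS (phiD i); have hY := pblockS (phiD j).
have hsp : in_span S (gr_mul (underline (pblock S (phi i))) (underline (pblock S (phi j)))).
  by case: hS => _ _ _; apply.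
have := span_const hsp (pblockS (phiD z)) (pblock_self (phiD z)) (lab_in hz).
by rewrite !grm_val ?lab_lt // => -[].
Qed.


Section Cases.
Variables (A1 A2 : {group gT}) (t1 t2 : bool).
Hypothesis dA : A1 \x A2 = D.
Hypothesis o1 : 1 < #|A1|.
Hypothesis o2 : 1 < #|A2|.

Lemma A12 : A1 * A2 = D. Proof. by case/dprodP: dA. Qed.

Lemma A1D : A1 \subset D.
Proof. by rewrite -A12 mulG_subl. Qed.
Lemma A2D : A2 \subset D.
Proof. by rewrite -A12 mulG_subr. Qed.

Lemma tensor_case :
  (forall x1 x2 y1 y2, x1 \in A1 -> x2 \in A1 -> y1 \in A2 -> y2 \in A2 ->
     (x2 * y2 \in pblock S (x1 * y1)) = Rel t1 x1 x2 && Rel t2 y1 y2) ->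
  S = tensor_bs (Sig A1 t1) (Sig A2 t2).
Proof.
move=> hrel.
have key : forall x1 y1, x1 \in A1 -> y1 \in A2 ->
    pblock S (x1 * y1) = blk A1 t1 x1 * blk A2 t2 y1.
  move=> x1 y1 h1 h2; apply/setP => z; apply/idP/idP => hz.
    have := pblockD hz; rewrite -A12 => /mulsgP [x2 y2 hx2 hy2 ez].
    move: hz; rewrite ez hrel // => /andP [r1 r2].
    by apply: mem_mulg; rewrite mem_blk ?hx2 ?hy2 ?r1 ?r2.
  case/mulsgP: hz => w1 w2; rewrite !mem_blk // => /andP [hw1 r1] /andP [hw2 r2] ->.
  by rewrite hrel // r1 r2.
rewrite /tensor_bs (Sig_blk t1 o1) (Sig_blk t2 o2) S_pblocks.
apply/setP => X; apply/imsetP/imset2P => [[x hx ->]|[X1 X2 /imsetP [x1 h1 ->] /imsetP [y1 h2 ->] ->]].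
  move: hx; rewrite -A12 => /mulsgP [x1 y1 h1 h2 ->].
  by exists (blk A1 t1 x1) (blk A2 t2 y1); rewrite ?key // imset_f.
exists (x1 * y1); last by rewrite key.
by rewrite -A12 mem_mulg.
Qed.

Lemma wreath_case :
  (forall x1 x2 y1 y2, x1 \in A1 -> x2 \in A1 -> y1 \in A2 -> y2 \in A2 ->
     (x2 * y2 \in pblock S (x1 * y1)) =
     if (y1 == 1) && (y2 == 1) then Rel t1 x1 x2 else [&& y1 != 1, y2 != 1 & Rel t2 y1 y2]) ->
  S = wreath_bs A1 (Sig A1 t1) (Sig A2 t2).
Proof.
move=> hrel.
have key : forall x1 y1, x1 \in A1 -> y1 \in A2 ->
    pblock S (x1 * y1) = if y1 == 1 then blk A1 t1 x1 else A1 * blk A2 t2 y1.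
  move=> x1 y1 h1 h2; apply/setP => z; apply/idP/idP => hz.
    have := pblockD hz; rewrite -A12 => /mulsgP [x2 y2 hx2 hy2 ez].
    move: hz; rewrite ez hrel //; case: (eqVneq y1 1) => [e1|n1] /=.
      case: (eqVneq y2 1) => [e2|n2] //= r1.
      by rewrite e2 mulg1 mem_blk ?hx2.
    case/andP => n2 r2; apply: mem_mulg => //; by rewrite mem_blk ?hy2.
  move: hz; case: (eqVneq y1 1) => [e1|n1].
    rewrite mem_blk // => /andP [hz r]; rewrite -(mulg1 z) hrel // e1 eqxx /=.
    exact: r.
  case/mulsgP => w1 w2 hw1; rewrite mem_blk // => /andP [hw2 r2] ->.
  rewrite hrel // (negbTE n1) /= r2 andbT.
  by move: r2; rewrite /Rel; case: (eqVneq y1 w2) => [<-|_] //= /and3P [].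
rewrite /wreath_bs (Sig_blk t1 o1) (Sig_blk t2 o2) S_pblocks.
apply/setP => X; apply/imsetP/setUP => [[x hx ->]|[/imsetP [x1 h1 ->]|/imsetP [X2]]].
- move: hx; rewrite -A12 => /mulsgP [x1 y1 h1 h2 ->]; rewrite key //.
  case: (eqVneq y1 1) => [e1|n1]; first by left; apply: imset_f.
  right; apply/imsetP; exists (blk A2 t2 y1) => //.
  rewrite !inE imset_f // andbT; apply/negP => /eqP e.
  by have := blk_self t2 h2; rewrite e inE (negbTE n1).
- exists x1; first exact: (subsetP A1D).
  by have := key x1 1 h1 (group1 _); rewrite mulg1 eqxx => ->.
- rewrite !inE => /andP [nX2 /imsetP [y1 h2 eX2]] ->; subst X2.
  have n1 : y1 != 1 by apply/eqP => e1; move: nX2; rewrite e1 blk1 eqxx.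
  exists y1; first exact: (subsetP A2D).
  by have := key 1 y1 (group1 _) h2; rewrite mul1g (negbTE n1) => ->.
Qed.

End Cases.


Definition psi x := find (fun k => phi k == x) (iota 0 nn).

Lemma psiP x : x \in D -> psi x < nn /\ phi (psi x) = x.
Proof.
move=> hx; have [k hk ek] := phi_surj hx.
have hh : has (fun k => phi k == x) (iota 0 nn) by apply/hasP; exists k; rewrite ?mem_iota ?ek //=.
split; first by move: hh; rewrite has_find size_iota.
by have := nth_find 0 hh; rewrite nth_iota ?add0n; [move/eqP | move: hh; rewrite has_find size_iota].
Qed.

Lemma psi_phi k : k < nn -> psi (phi k) = k.
Proof. by move=> hk; have [h1 h2] := psiP (phiD k); apply: phi_inj. Qed.

Definition Indep (x0 y0 : gT) := forall i j k l, i < p -> j < p -> k < p -> l < p ->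
  x0 ^+ i * y0 ^+ j = x0 ^+ k * y0 ^+ l -> i = k /\ j = l.

Lemma ij_div i j : j < p -> (i * p + j) %/ p = i.
Proof. by move=> hj; rewrite divnMDl // divn_small ?addn0. Qed.
Lemma ij_mod i j : j < p -> (i * p + j) %% p = j.
Proof. by move=> hj; rewrite modnMDl modn_small. Qed.
Lemma ij_lt i j : i < p -> j < p -> i * p + j < nn.
Proof. rewrite /nn => hi hj; nia. Qed.

Lemma exp_red (x : gT) i : x \in D -> x ^+ i = x ^+ (i %% p).
Proof. by move=> hx; rewrite expg_mod // expD. Qed.

Section Lin.
Variables (x0 y0 : gT).
Hypothesis hx0 : x0 \in D.
Hypothesis hy0 : y0 \in D.
Hypothesis hind : Indep x0 y0.

Definition lmap x := if x \in D then x0 ^+ (psi x %/ p) * y0 ^+ (psi x %% p) else x.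

Lemma lmap_phi k : k < nn -> lmap (phi k) = x0 ^+ (k %/ p) * y0 ^+ (k %% p).
Proof. by move=> hk; rewrite /lmap phiD psi_phi. Qed.

Lemma lmapD x : x \in D -> lmap x \in D.
Proof. by move=> hx; rewrite /lmap hx groupM ?groupX. Qed.

Lemma lmap_inj : injective lmap.
Proof.
have H : forall x y, x \in D -> y \in D -> lmap x = lmap y -> x = y.
  move=> x y hx hy; have [hk <-] := psiP hx; have [hl <-] := psiP hy.
  rewrite !lmap_phi // => /hind [] //; try exact: idx_lt; try exact: ltn_pmod.
  by move=> e1 e2; rewrite (idx_eq hk) (idx_eq hl) e1 e2.
move=> x y; case: (boolP (x \in D)) => hx; case: (boolP (y \in D)) => hy; first exact: H.
- by move=> e; move: (lmapD hx); rewrite e /lmap (negbTE hy) (negbTE hy).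
- by move=> e; move: (lmapD hy); rewrite -e /lmap (negbTE hx) (negbTE hx).
- by rewrite /lmap (negbTE hx) (negbTE hy).
Qed.

Lemma lmap_morph x y : x \in D -> y \in D -> lmap (x * y) = lmap x * lmap y.
Proof.
move=> hx hy; have [hk <-] := psiP hx; have [hl <-] := psiP hy.
rewrite -phi_add !lmap_phi //; last exact: mkidx_lt.
rewrite /iadd mkidx_div // mkidx_mod //.
rewrite -(exp_red _ hx0) -(exp_red _ hy0) !expgD -!mulgA; congr (_ * _); rewrite !mulgA; congr (_ * _).
by apply: comD; rewrite groupX.
Qed.

Definition lperm := perm lmap_inj.

Lemma lperm_aut : lperm \in Aut D.
Proof.
rewrite inE; apply/andP; split.
  apply/subsetP => x; rewrite inE permE /lmap; case: (x \in D) => //; by rewrite eqxx.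
by apply/morphicP => x y hx hy; rewrite !permE lmap_morph.
Qed.

Lemma lperm_phi k : k < nn -> lperm (phi k) = x0 ^+ (k %/ p) * y0 ^+ (k %% p).
Proof. by move=> hk; rewrite permE lmap_phi. Qed.

Lemma x0_order : #[x0] = p.
Proof.
have : #[x0] %| p by rewrite order_dvdn expD.
case/primeP: p_prime => _ /[apply] /orP [/eqP h|/eqP //].
move/eqP: h; rewrite order_eq1 => /eqP e.
have := @hind 1%N 0 0 0 p_gt1 p_gt0 p_gt0 p_gt0; rewrite e expg1n !expg0 => /(_ erefl) [].
by [].
Qed.

Lemma y0_order : #[y0] = p.
Proof.
have : #[y0] %| p by rewrite order_dvdn expD.
case/primeP: p_prime => _ /[apply] /orP [/eqP h|/eqP //].
move/eqP: h; rewrite order_eq1 => /eqP e.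
have := @hind 0 1%N 0 0 p_gt0 p_gt1 p_gt0 p_gt0; rewrite e expg1n !expg0 => /(_ erefl) [].
by [].
Qed.

Lemma ind_span x : x \in D -> exists i j, [/\ i < p, j < p & x = x0 ^+ i * y0 ^+ j].
Proof.
move=> hx.
pose T := [set x0 ^+ (nat_of_ord ij.1) * y0 ^+ (nat_of_ord ij.2) | ij : 'I_p * 'I_p].
have hT : T = D :> {set gT}.
  apply/eqP; rewrite eqEcard; apply/andP; split.
    by apply/subsetP => z /imsetP [ij _ ->]; rewrite groupM ?groupX.
  rewrite card_imset; last first.
    move=> [i j] [k l] /= /hind [] // e1 e2.
    by congr pair; apply: val_inj.
  by rewrite card_prod card_ord -(dprod_card dD) -[#|<[a]>|]/#[a] -[#|<[b]>|]/#[b] oa ob.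
move: hx; rewrite -hT => /imsetP [[i j] _ ->]; by exists i, j.
Qed.

Lemma in_cyc_x0 z : z \in <[x0]> -> exists2 i, i < p & z = x0 ^+ i.
Proof. by case/cycleP => i ->; exists (i %% p); rewrite ?ltn_pmod // -exp_red. Qed.
Lemma in_cyc_y0 z : z \in <[y0]> -> exists2 i, i < p & z = y0 ^+ i.
Proof. by case/cycleP => i ->; exists (i %% p); rewrite ?ltn_pmod // -exp_red. Qed.

Lemma ind_dprod : <[x0]> \x <[y0]> = D.
Proof.
rewrite dprodE.
- apply/eqP; rewrite eqEsubset; apply/andP; split.
    by rewrite mul_subG // cycle_subG.
  apply/subsetP => x /ind_span [i [j [_ _ ->]]].
  by rewrite mem_mulg // mem_cycle.
- by apply: cents_cycle; apply: comD.
apply/trivgP/subsetP => z; rewrite inE => /andP [/in_cyc_x0 [i hi ->] /in_cyc_y0 [j hj e]].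
have := @hind i 0 0 j hi p_gt0 p_gt0 hj; rewrite !expg0 mulg1 mul1g => /(_ e) [-> _].
by rewrite expg0 inE.
Qed.

Lemma Rel_x0 t i k : i < p -> k < p -> Rel t (x0 ^+ i) (x0 ^+ k) = Rt t i k.
Proof.
move=> hi hk.
have E : forall i k, i < p -> k < p -> (x0 ^+ i == x0 ^+ k) = (i == k).
  move=> i' k' hi' hk'; apply/eqP/eqP => [e|->] //.
  by have := @hind i' 0 k' 0 hi' p_gt0 hk' p_gt0; rewrite !expg0 !mulg1 => /(_ e) [].
by rewrite /Rel /Rt E // -(expg0 x0) !E.
Qed.

Lemma Rel_y0 t i k : i < p -> k < p -> Rel t (y0 ^+ i) (y0 ^+ k) = Rt t i k.
Proof.
move=> hi hk.
have E : forall i k, i < p -> k < p -> (y0 ^+ i == y0 ^+ k) = (i == k).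
  move=> i' k' hi' hk'; apply/eqP/eqP => [e|->] //.
  by have := @hind 0 i' 0 k' p_gt0 hi' p_gt0 hk'; rewrite !expg0 !mul1g => /(_ e) [].
by rewrite /Rel /Rt E // -(expg0 y0) !E.
Qed.

Lemma y0_eq1 j : j < p -> (y0 ^+ j == 1) = (j == 0).
Proof.
move=> hj; apply/eqP/eqP => [e|->]; last by rewrite expg0.
by have := @hind 0 j 0 0 p_gt0 hj p_gt0 p_gt0; rewrite !expg0 e => /(_ erefl) [].
Qed.

End Lin.


Lemma lt_row u v : u < nn -> v < nn ->
  nth [::] (nth [::] (lttab p) u) v = [seq ilin p (x %/ p) u (x %% p) v | x <- iota 0 nn].
Proof.
by move=> hu hv; rewrite /lttab (nth_map 0) ?size_iota // nth_iota // (nth_map 0) ?size_iota // nth_iota.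
Qed.

Lemma ilin_lt i u j v : ilin p i u j v < nn.
Proof. exact: mkidx_lt. Qed.

Lemma basis_ind u v : u < nn -> v < nn -> basis_b (lttab p) u v -> Indep (phi u) (phi v).
Proof.
move=> hu hv; rewrite /basis_b lt_row // => hb i j k l hi hj hk hl.
rewrite -!phi_lin => /phi_inj e; have {e} := e (ilin_lt _ _ _ _) (ilin_lt _ _ _ _).
set L := [seq _ | _ <- _] in hb.
have NL : forall i j, i < p -> j < p -> nth 0 L (i * p + j) = ilin p i u j v.
  by move=> i' j' hi' hj'; rewrite /L (nth_map 0) ?size_iota ?ij_lt // nth_iota ?ij_lt // add0n ij_div // ij_mod.
rewrite -NL // -NL // => /eqP; rewrite nth_uniq ?size_map ?size_iota ?ij_lt // => /eqP e.
by split; [rewrite -(ij_div i hj) e ij_div | rewrite -(ij_mod i hj) e ij_mod].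
Qed.

Lemma allp4P P i j k l : allp4 p P -> i < p -> j < p -> k < p -> l < p -> P i j k l.
Proof.
move=> h hi hj hk hl.
have M : forall m, m < p -> m \in iota 0 p by move=> m hm; rewrite mem_iota.
by move: h => /allP /(_ i (M _ hi)) /allP /(_ j (M _ hj)) /allP /(_ k (M _ hk)) /allP /(_ l (M _ hl)).
Qed.

Lemma allklP P k l : allkl p P -> k < nn -> l < nn -> P k l.
Proof.
move=> h hk hl.
have M : forall m, m < nn -> m \in iota 0 nn by move=> m hm; rewrite mem_iota.
by move: h => /allP /(_ k (M _ hk)) /allP /(_ l (M _ hl)).
Qed.

Lemma lab_ilin u v i j k l : u < nn -> v < nn -> i < p -> j < p -> k < p -> l < p ->
  (clab rs (LT (lttab p) u v (i * p + j)) == clab rs (LT (lttab p) u v (k * p + l)))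
  = (phi u ^+ k * phi v ^+ l \in pblock S (phi u ^+ i * phi v ^+ j)).
Proof.
move=> hu hv hi hj hk hl.
rewrite !LT_E ?ij_lt // !ij_div // !ij_mod // !rsE ?ilin_lt // lab_eq ?ilin_lt //.
by rewrite !phi_lin.
Qed.

Definition Disj2 := exists (A1 A2 : {group gT}) (S1 S2 : {set {set gT}}),
         [/\ A1 \x A2 = D, (cyclic A1 /\ #|A1| = p), (cyclic A2 /\ #|A2| = p),
             (is_Sring A1 S1 /\ is_Sring A2 S2) & S = tensor_bs S1 S2].
Definition Disj3 := exists (A1 A2 : {group gT}) (S1 S2 : {set {set gT}}),
         [/\ A1 \x A2 = D, (cyclic A1 /\ #|A1| = p), (cyclic A2 /\ #|A2| = p),
             (is_Sring A1 S1 /\ is_Sring A2 S2) & S = wreath_bs A1 S1 S2].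

Lemma srch_ex P : srch p (lttab p) P ->
  exists u v t1 t2, [/\ u < nn, v < nn, Indep (phi u) (phi v) & P u v t1 t2].
Proof.
case/hasP => u; rewrite mem_iota add0n => /andP [_ hu] /hasP [v]; rewrite mem_iota add0n => /andP [_ hv].
case/andP => hb /hasP [t1 _ /hasP [t2 _ ht]].
by exists u, v, t1, t2; split=> //; apply: basis_ind.
Qed.

Lemma tensor_sound : srch p (lttab p) (trel p (lttab p) rs) -> Disj2.
Proof.
case/srch_ex => u [v [t1 [t2 [hu hv hind ht]]]].
have hx0 := phiD u; have hy0 := phiD v.
have o1 : #|<[phi u]>| = p by apply: (x0_order hx0 hind).
have o2 : #|<[phi v]>| = p by apply: (y0_order hy0 hind).
exists <[phi u]>%G, <[phi v]>%G, (Sig <[phi u]> t1), (Sig <[phi v]> t2); split.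
- exact: ind_dprod.
- by split; [exact: cycle_cyclic | exact: o1].
- by split; [exact: cycle_cyclic | exact: o2].
- by split; apply: Sig_sring; rewrite ?o1 ?o2.
apply: tensor_case; rewrite ?o1 ?o2 //; first exact: ind_dprod.
move=> x1 x2 y1 y2 /(in_cyc_x0 hx0) [i hi ->] /(in_cyc_x0 hx0) [k hk ->].
move=> /(in_cyc_y0 hy0) [j hj ->] /(in_cyc_y0 hy0) [l hl ->].
rewrite -lab_ilin // (Rel_x0 hind) // (Rel_y0 hind) //.
exact: (eqP (@allp4P _ i j k l ht hi hj hk hl)).
Qed.

Lemma wreath_sound : srch p (lttab p) (wrel p (lttab p) rs) -> Disj3.
Proof.
case/srch_ex => u [v [t1 [t2 [hu hv hind ht]]]].
have hx0 := phiD u; have hy0 := phiD v.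
have o1 : #|<[phi u]>| = p by apply: (x0_order hx0 hind).
have o2 : #|<[phi v]>| = p by apply: (y0_order hy0 hind).
exists <[phi u]>%G, <[phi v]>%G, (Sig <[phi u]> t1), (Sig <[phi v]> t2); split.
- exact: ind_dprod.
- by split; [exact: cycle_cyclic | exact: o1].
- by split; [exact: cycle_cyclic | exact: o2].
- by split; apply: Sig_sring; rewrite ?o1 ?o2.
apply: wreath_case; rewrite ?o1 ?o2 //; first exact: ind_dprod.
move=> x1 x2 y1 y2 /(in_cyc_x0 hx0) [i hi ->] /(in_cyc_x0 hx0) [k hk ->].
move=> /(in_cyc_y0 hy0) [j hj ->] /(in_cyc_y0 hy0) [l hl ->].
rewrite -lab_ilin // (Rel_x0 hind) // (Rel_y0 hind) // !(y0_eq1 hind) //.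
exact: (eqP (@allp4P _ i j k l ht hi hj hk hl)).
Qed.


Lemma S_eq_blocks (B : gT -> {set gT}) :
  (forall x, x \in D -> pblock S x = B x) -> S = [set B x | x in D].
Proof. by move=> h; rewrite S_pblocks; apply: eq_in_imset. Qed.

Lemma lab0E k : k < nn -> (lab k == 0) = (k == 0).
Proof. by move=> hk; have := allP rs_cond0 k; rewrite mem_iota add0n hk rsE // => /(_ isT) /eqP. Qed.

Lemma nn_gt1 : 1 < nn.
Proof. by rewrite /nn; nia. Qed.

Lemma rank2_sound : rank2_b p rs -> sring_rank S = 2.
Proof.
move=> h.
have hl1 : forall k, 0 < k < nn -> lab k = lab 1.
  move=> k /andP [k0 hk]; apply/eqP; rewrite -rsE // -rsE ?nn_gt1 //; apply: (allP h).
  by rewrite mem_iota k0 /= -(ltn_predK nn_gt1) add1n ltnS -ltnS (ltn_predK nn_gt1).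
have rel : forall x y, x \in D -> y \in D -> (y \in pblock S x) = Rel true x y.
  move=> x y hx hy; have [k hk <-] := phi_surj hx; have [l hl <-] := phi_surj hy.
  rewrite -lab_eq // /Rel phi_lt_eq // -phi0 !phi_lt_eq ?nn_gt0 //=.
  case: (posnP k) => [->|k0]; case: (posnP l) => [->|l0] //=.
  - by rewrite lab0.
  - by rewrite lab0 orbF eq_sym lab0E // eq_sym.
  - by rewrite lab0 orbF lab0E.
  - by rewrite !hl1 ?k0 ?l0 // eqxx orbT.
have e : S = Sig D true.
  rewrite (Sig_blk true); last by have := phiD 1; have := nn_gt1; rewrite (cardsD1 1 D) group1 ltnS card_gt0 => _ h1; apply/set0Pn; exists (phi 1); rewrite !inE (phiD 1) andbT -phi0 phi_lt_eq ?nn_gt1 ?nn_gt0.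
  apply: S_eq_blocks => x hx; apply/setP => z; rewrite mem_blk //.
  case: (boolP (z \in D)) => hz /=; first exact: rel.
  by apply/negP => /pblockD; rewrite (negbTE hz).
rewrite /sring_rank e /Sig cards2; suff -> : [set 1] != D :\ 1 by [].
by apply/eqP => /setP /(_ 1); rewrite !inE eqxx.
Qed.

Lemma inv_ind : Indep a^-1 b^-1.
Proof.
move=> i j k l hi hj hk hl; rewrite !expVgn => e.
have e' : a ^+ i * b ^+ j = a ^+ k * b ^+ l.
  have := congr1 invg e; rewrite !invMg !invgK => e2.
  by rewrite (comD (groupX i aD) (groupX j bD)) (comD (groupX k aD) (groupX l bD)).
case: (ab_inj e') => e1 e2.
by split; [apply: expa_inj | apply: expb_inj].
Qed.


Definition Disj4 := p = 3 /\ exists delta : {perm gT},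
         [/\ delta \in Aut D, (forall x, x \in D -> delta x = x^-1) &
             S = Cyc [set 1; delta] D].

Lemma rel_idx (P : gT -> gT -> bool) (Q : nat -> nat -> bool) :
  (forall k l, k < nn -> l < nn -> (lab k == lab l) = Q k l) ->
  (forall k l, k < nn -> l < nn -> P (phi k) (phi l) = Q k l) ->
  forall x y, x \in D -> y \in D -> (y \in pblock S x) = P x y.
Proof.
move=> h1 h2 x y hx hy; have [k hk <-] := phi_surj hx; have [l hl <-] := phi_surj hy.
by rewrite -lab_eq // h1 // h2.
Qed.

Lemma inv_sound : p = 3 -> inv_b p (ngtab p) rs -> Disj4.
Proof.
move=> e3 h; split=> //.
have haV : a^-1 \in D by rewrite groupV aD.
have hbV : b^-1 \in D by rewrite groupV bD.
set delta := lperm haV hbV inv_ind.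
have hd : forall x, x \in D -> delta x = x^-1.
  move=> x hx; have [k hk <-] := phi_surj hx.
  rewrite /delta lperm_phi // !expVgn /phi invMg.
  by apply: comD; rewrite groupV; apply: groupX; [exact: aD | exact: bD].
exists delta; split=> //; first exact: lperm_aut.
have rel := @rel_idx (fun x y => (y == x) || (y == x^-1)) (fun k l => (k == l) || (l == nth 0 (ngtab p) k)).
rewrite /Cyc; apply: S_eq_blocks => x hx.
rewrite /orbit imsetU1 imset_set1 /= !apermE perm1 hd //.
have R : forall y, y \in D -> (y \in pblock S x) = (y == x) || (y == x^-1).
  move=> y hy; apply: rel => // k l hk hl.
    by rewrite -!rsE //; exact: (eqP (allklP h hk hl)).
  by rewrite nth_ng // -phi_neg !phi_lt_eq ?(@mkidx_lt p) // [l == k]eq_sym.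
apply/setP => z; rewrite !inE; case: (boolP (z \in D)) => hz; first exact: R.
have -> : (z \in pblock S x) = false by apply/negP => /pblockD; rewrite (negbTE hz).
by apply/esym/negbTE; apply: contra hz => /orP [/eqP ->|/eqP ->] //; rewrite groupV.
Qed.

Definition Disj5 := p = 3 /\ exists sigma : {perm gT},
         [/\ sigma \in Aut D, sigma a = b, sigma b = a ^+ 2 &
             (exists2 f : {perm gT}, f \in Aut D &
               [set (f : gT -> gT) @: X | X : {set gT} in S] = Cyc <[sigma]> D)].

Lemma pal_case (sg f : {perm gT}) : sg \in Aut D -> f \in Aut D -> sg ^+ 4 = 1 ->
  (forall x y, x \in D -> y \in D ->
     (y \in pblock S x) = [exists i : 'I_4, f y == (sg ^+ i) (f x)]) ->
  [set (f : gT -> gT) @: X | X : {set gT} in S] = Cyc <[sg]> D.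
Proof.
move=> hsg hf h4 hrel.
have fD : f @: D = D.
  apply/eqP; rewrite eqEcard card_imset ?leqnn ?andbT; last exact: perm_inj.
  by apply/subsetP => _ /imsetP [x hx ->]; apply: Aut_closed.
have key : forall x, x \in D -> f @: pblock S x = orbit 'P <[sg]> (f x).
  move=> x hx; apply/setP => z; apply/imsetP/imsetP.
    case=> y hy ->; have hyD := pblockD hy.
    move: hy; rewrite hrel // => /existsP [i /eqP e].
    by exists (sg ^+ i); [exact: mem_cycle | rewrite /= apermE e].
  case=> g /cycleP [i ->] ->; rewrite /= apermE.
  have hfx : f x \in D by apply: Aut_closed.
  have hz : (sg ^+ i) (f x) \in D by apply: Aut_closed; rewrite ?groupX.
  exists ((f^-1)%g ((sg ^+ i) (f x))); last by rewrite permKV.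
  rewrite hrel //; last by apply: Aut_closed; rewrite ?groupV.
  apply/existsP; exists (Ordinal (ltn_pmod i (isT : 0 < 4))); rewrite permKV /=.
  by rewrite expg_mod.
rewrite S_pblocks /Cyc -imset_comp -{2}fD -imset_comp.
by apply: eq_in_imset => x hx /=; apply: key.
Qed.


Lemma exists_has n (P : nat -> bool) : [exists i : 'I_n, P i] = has P (iota 0 n).
Proof.
apply/existsP/hasP => [[i hi]|[i]]; first by exists (nat_of_ord i); rewrite ?mem_iota ?add0n ?ltn_ord.
by rewrite mem_iota add0n => /andP [_ hi] h; exists (Ordinal hi).
Qed.

Lemma LT_lt u w k : u < nn -> w < nn -> k < nn -> LT (lttab p) u w k < nn.
Proof. by move=> hu hw hk; rewrite LT_E //; exact: ilin_lt. Qed.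

Lemma pal_sound : p = 3 -> pal_b p (lttab p) rs -> Disj5.
Proof.
move=> e3 h; split=> //.
have h1 : 1 < nn by exact: nn_gt1.
have h2 : 2 * p < nn by rewrite /nn e3.
have c1 : basis_b (lttab p) 1 (2 * p) by rewrite e3; vm_compute.
have c2 : all (fun k => iter 4 (sig p (lttab p)) k == k) (iota 0 nn) by rewrite e3; vm_compute.
have ind1 := basis_ind h1 h2 c1.
set sg := lperm (phiD 1) (phiD (2 * p)) ind1.
have sgphi : forall k, k < nn -> sg (phi k) = phi (sig p (lttab p) k).
  by move=> k hk; rewrite /sg lperm_phi // /sig LT_E // phi_lin.
have siglt : forall k, k < nn -> sig p (lttab p) k < nn by move=> k hk; exact: LT_lt.
have sgit : forall i k, k < nn -> iter i sg (phi k) = phi (iter i (sig p (lttab p)) k) /\ iter i (sig p (lttab p)) k < nn.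
  move=> i k hk; elim: i => [|i [IH1 IH2]] //=; by rewrite IH1 sgphi ?siglt.
have sg4 : sg ^+ 4 = 1.
  apply/permP => x; rewrite perm1 permX; case: (boolP (x \in D)) => hx.
    have [k hk <-] := phi_surj hx; have [-> _] := sgit 4 k hk.
    by have := allP c2 k; rewrite mem_iota add0n hk => /(_ isT) /eqP ->.
  have fx : sg x = x by rewrite /sg permE /lmap (negbTE hx).
  by rewrite /= !fx.
have pa : phi p = a by rewrite /phi divnn p_gt0 modnn expg1 expg0 mulg1.
have pb : phi 1 = b by rewrite /phi divn_small // modn_small // expg0 expg1 mul1g.
have pa2 : phi (2 * p) = a ^+ 2 by rewrite /phi mulnK // modnMl expg0 mulg1.
have hp : p < nn by rewrite /nn -{1}(muln1 p) ltn_mul2l p_gt0.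
exists sg; split.
- exact: lperm_aut.
- by rewrite -pa /sg lperm_phi // divnn p_gt0 modnn expg1 expg0 mulg1.
- by rewrite -pb /sg lperm_phi // divn_small // modn_small // expg0 expg1 mul1g.
case/hasP: h => u; rewrite mem_iota add0n => /andP [_ hu] /hasP [w]; rewrite mem_iota add0n => /andP [_ hw].
case/andP => hb hrel.
set f := lperm (phiD u) (phiD w) (basis_ind hu hw hb).
have fphi : forall k, k < nn -> f (phi k) = phi (LT (lttab p) u w k).
  by move=> k hk; rewrite /f lperm_phi // LT_E // phi_lin.
exists f; first exact: lperm_aut.
apply: pal_case => //; first exact: lperm_aut; first exact: lperm_aut.
apply: (rel_idx (Q := fun k l => has (fun i => LT (lttab p) u w l == iter i (sig p (lttab p)) (LT (lttab p) u w k)) (iota 0 4))) => k l hk hl.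
  by rewrite -!rsE //; exact: (eqP (allklP hrel hk hl)).
rewrite (exists_has 4 (fun i => f (phi l) == (sg ^+ i) (f (phi k)))); apply: eq_in_has => i _ /=.
rewrite !fphi // permX; have [-> hlt] := sgit i _ (LT_lt hu hw hk).
by rewrite phi_lt_eq ?LT_lt.
Qed.


Hypothesis hp23 : (p == 2) || (p == 3).

Lemma main_sec : [\/ sring_rank S = 2, Disj2, Disj3 | Disj4 \/ Disj5].
Proof.
have chk : check p by case/orP: hp23 => /eqP ->; [exact: check2 | exact: check3].
move: chk; cbv zeta beta delta [check] => /allP /(_ _ rs_gen).
rewrite rs_cond0 rs_invc rs_src => hc.
have {hc} hc : classify p (ngtab p) (lttab p) rs := hc.
case/or4P: hc => [h|h|h|/andP [/eqP e3 /orP [h|h]]].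
- by apply: Or41; apply: rank2_sound.
- by apply: Or42; apply: tensor_sound.
- by apply: Or43; apply: wreath_sound.
- by apply: Or44; left; apply: inv_sound.
- by apply: Or44; right; apply: pal_sound.
Qed.





End Main.

Theorem lemma6p2 (gT : finGroupType) (p : nat) (D : {group gT}) (a b : gT)
  (S : {set {set gT}}) :
  (p == 2) || (p == 3) ->
  #[a] = p -> #[b] = p -> <[a]> \x <[b]> = D ->
  is_Sring D S ->
  [\/ sring_rank S = 2,
      (exists (A1 A2 : {group gT}) (S1 S2 : {set {set gT}}),
         [/\ A1 \x A2 = D, (cyclic A1 /\ #|A1| = p), (cyclic A2 /\ #|A2| = p),
             (is_Sring A1 S1 /\ is_Sring A2 S2) & S = tensor_bs S1 S2]),
      (exists (A1 A2 : {group gT}) (S1 S2 : {set {set gT}}),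
         [/\ A1 \x A2 = D, (cyclic A1 /\ #|A1| = p), (cyclic A2 /\ #|A2| = p),
             (is_Sring A1 S1 /\ is_Sring A2 S2) & S = wreath_bs A1 S1 S2])
      |
      (p = 3 /\ exists delta : {perm gT},
         [/\ delta \in Aut D, (forall x, x \in D -> delta x = x^-1) &
             S = Cyc [set 1; delta] D]) \/
      (p = 3 /\ exists sigma : {perm gT},
         [/\ sigma \in Aut D, sigma a = b, sigma b = a ^+ 2 &
             (exists2 f : {perm gT}, f \in Aut D &
               [set (f : gT -> gT) @: X | X : {set gT} in S] = Cyc <[sigma]> D)])].
Proof.
move=> hp oa ob dD hS.
have p_gt1 : 1 < p by case/orP: hp => /eqP ->.
have pr : prime p by case/orP: hp => /eqP ->.
by apply: main_sec.
Qed.
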